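(* Let $\mathcal{G}_{55}$ be the network described in the context, with nodes $(i,j)$, $1\le i,j\le 5$. Define $5\times5$ $0/1$ matrices $M_1=I_5$, $M_2$ with ones exactly at positions $(1,2),(2,3),(3,4),(4,5),(5,1)$, $M_3$ with ones exactly at $(1,3),(2,5),(3,2),(4,1),(5,4)$, $M_4$ with ones exactly at $(1,4),(2,1),(3,5),(4,3),(5,2)$, $M_5$ with ones exactly at $(1,5),(2,4),(3,1),(4,2),(5,3)$. Let $K$ be the 5-coloring of the nodes in which node $(i,j)$ has color $k$ iff $(M_k)_{ij}=1$. Then $K$ is balanced, but $K$ is not an orbit coloring, i.e. there is no subgroup $\Sigma\subseteq\mathbb{S}_5\times\mathbb{S}_5$ whose orbits on the nodes are exactly the color classes of $K$.
   Context: For integers $m,n\ge1$, the network $\mathcal{G}_{mn}$ has node set $\{(i,j):1\le i\le m,\ 1\le j\le n\}$ ($i$ indexes rows, $j$ columns), all nodes of the same type. For each ordered pair of distinct nodes $(c,d)$ there is exactly one arrow with head $c$ and tail $d$, whose type is: ''row'' if $c,d$ lie in the same row, ''column'' if they lie in the same column, ''diagonal'' otherwise; in addition each node has an internal arrow from itself to itself (a fourth type). The group $\mathbb{S}_m\times\mathbb{S}_n$ acts on the nodes by $(\sigma,\tau)\cdot(i,j)=(\sigma(i),\tau(j))$; it is the symmetry group of $\mathcal{G}_{mn}$. A coloring is a map from nodes to a set of colors (identified up to the partition it induces). A coloring is balanced if whenever nodes $c,d$ have the same color, for every arrow type and every color $k$ the number of input arrows of that type to $c$ with tail of color $k$ equals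 the corresponding number for $d$. For a subgroup $\Sigma$ of the symmetry group, the orbit coloring of $\Sigma$ has as color classes the $\Sigma$-orbits on nodes; a coloring is an orbit coloring if it is the orbit coloring of some such subgroup. *)

(* Defs.v *)
From HB Require Import structures.
From mathcomp Require Import all_boot all_order all_algebra all_fingroup.
Set Implicit Arguments. Unset Strict Implicit. Unset Printing Implicit Defensive.

(* Nodes of G_{mn}: pairs (i,j) with i : 'I_m (row), j : 'I_n (column);
   0-based indices, so ordinal i corresponds to the paper's row i+1. *)
Definition node (m n : nat) := ('I_m * 'I_n)%type.

Inductive arrow_type := Row | Column | Diagonal | Internal.

Definition arrow_type_eqb (a b : arrow_type) : bool :=
  match a, b with
  | Row, Row | Column, Column | Diagonal, Diagonal | Internal, Internal => true
  | _, _ => false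
  end.
Lemma arrow_type_eqP : Equality.axiom arrow_type_eqb.
Proof. by case; case; constructor. Qed.
HB.instance Definition _ := hasDecEq.Build arrow_type arrow_type_eqP.

(* Type of the unique arrow with head c and tail d (internal arrow if c = d). *)
Definition atype m n (c d : node m n) : arrow_type :=
  if c == d then Internal
  else if c.1 == d.1 then Row
  else if c.2 == d.2 then Column
  else Diagonal.

Definition in_count m n (C : eqType) (col : node m n -> C)
    (c : node m n) (t : arrow_type) (k : C) : nat :=
  #|[pred d : node m n | (atype c d == t) && (col d == k)]|.

Definition balanced m n (C : eqType) (col : node m n -> C) : Prop :=
  forall c d : node m n, col c = col d ->
    forall (t : arrow_type) (k : C), in_count col c t k = in_count col d t k.

Definition sym_act m n (s : {perm 'I_m} * {perm 'I_n}) (x : node m n) : node m n :=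
  (s.1 x.1, s.2 x.2).

Definition is_orbit_coloring_of m n (C : eqType) (col : node m n -> C)
    (Sigma : {group ({perm 'I_m} * {perm 'I_n})}) : Prop :=
  forall x y : node m n, col x = col y <-> exists2 s, s \in Sigma & sym_act s x = y.

Definition is_orbit_coloring m n (C : eqType) (col : node m n -> C) : Prop :=
  exists Sigma : {group ({perm 'I_m} * {perm 'I_n})}, is_orbit_coloring_of col Sigma.

(* Positions (1-based, (row, column)) of the ones of M_1, ..., M_5. *)
Definition ones_of (k : nat) : seq (nat * nat) :=
  match k with
  | 1 => [:: (1,1); (2,2); (3,3); (4,4); (5,5)]
  | 2 => [:: (1,2); (2,3); (3,4); (4,5); (5,1)]
  | 3 => [:: (1,3); (2,5); (3,2); (4,1); (5,4)]
  | 4 => [:: (1,4); (2,1); (3,5); (4,3); (5,2)]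
  | 5 => [:: (1,5); (2,4); (3,1); (4,2); (5,3)]
  | _ => [::]
  end.

(* M k for k : 'I_5 is the paper's M_{k+1}, a 5x5 0/1 matrix. *)
Definition M (k : 'I_5) : 'M[nat]_5 :=
  \matrix_(i < 5, j < 5) (nat_of_bool ((i.+1, j.+1) \in ones_of k.+1)).

Definition K (x : node 5 5) : option 'I_5 := [pick k : 'I_5 | M k x.1 x.2 == 1%N].

(* Main.v *)
Require Import Defs.
From mathcomp Require Import all_boot all_order all_algebra all_fingroup.
From Stdlib Require Import FunctionalExtensionality.

Definition Kc (x : node 5 5) : option 'I_5 :=
  [pick k : 'I_5 | (x.1.+1, x.2.+1) \in ones_of k.+1].

Lemma K_Kc : K = Kc.
Proof.
apply: functional_extensionality => x; rewrite /K /Kc.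
apply: eq_pick => k /=; rewrite mxE; by case: (_ \in _).
Qed.

Definition Kn (x : node 5 5) : option nat :=
  let n := find (fun k => (x.1.+1, x.2.+1) \in ones_of k.+1) (iota 0 5) in
  if n < 5 then Some n else None.

Definition o0 : 'I_5 := @Ordinal 5 0 erefl.
Definition o1 : 'I_5 := @Ordinal 5 1 erefl.
Definition o2 : 'I_5 := @Ordinal 5 2 erefl.
Definition o3 : 'I_5 := @Ordinal 5 3 erefl.
Definition o4 : 'I_5 := @Ordinal 5 4 erefl.

Ltac ord5 i := case: i => [[|[|[|[|[|?]]]]] ?] //.

Lemma Kval x : omap val (Kc x) = Kn x.
Proof.
case: x => i j; ord5 i; ord5 j; rewrite /Kc; case: pickP => [k|H0].
all: try (ord5 k; vm_compute; intros; first [reflexivity | discriminate]).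
all: have := H0 o0; have := H0 o1; have := H0 o2; have := H0 o3; have := H0 o4.
all: vm_compute; intros; first [reflexivity | discriminate].
Qed.

Definition ordl : seq 'I_5 := [:: o0; o1; o2; o3; o4].
Definition nodes : seq (node 5 5) := [seq (i, j) | i <- ordl, j <- ordl].
Definition colorsN : seq (option nat) := None :: [seq Some k | k <- iota 0 5].
Definition types := [:: Row; Column; Diagonal; Internal].

Lemma mem_nodes c : c \in nodes.
Proof. case: c => i j; ord5 i; ord5 j; vm_compute; reflexivity. Qed.

Lemma uniq_nodes : uniq nodes.
Proof. vm_compute; reflexivity. Qed.

Lemma card_nodes (P : pred (node 5 5)) : #|P| = count P nodes.
Proof.
rewrite -size_filter.
have /card_uniqP <- := filter_uniq P uniq_nodes.
apply: eq_card => d; by rewrite mem_filter mem_nodes andbT.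
Qed.

Definition cnt (c : node 5 5) t k :=
  count [pred d : node 5 5 | (atype c d == t) && (Kn d == k)] nodes.

Lemma in_count_cnt c t k : in_count K c t k = cnt c t (omap val k).
Proof.
rewrite /in_count card_nodes /cnt K_Kc; apply: eq_count => d /=.
by rewrite -Kval (inj_eq (inj_omap val_inj)).
Qed.

Lemma bigcheck : all (fun c => all (fun d => (Kn c == Kn d) ==>
   all (fun t => all (fun k => cnt c t k == cnt d t k) colorsN) types) nodes) nodes.
Proof. vm_compute. reflexivity. Qed.

Lemma mem_colors (k : option 'I_5) : omap val k \in colorsN.
Proof. case: k => [k|] //; ord5 k. Qed.

Lemma mem_types t : t \in types.
Proof. by case: t. Qed.

Theorem mainTheorem2 : balanced K /\ ~ is_orbit_coloring K.
Proof.
split.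
  move=> c d Hcd t k; rewrite !in_count_cnt.
  have Hn : Kn c = Kn d by rewrite -!Kval -K_Kc Hcd.
  have h1 := allP bigcheck c (mem_nodes c).
  have h2 := allP h1 d (mem_nodes d).
  rewrite Hn eqxx implyTb in h2.
  have h3 := allP h2 t (mem_types t).
  have h4 := allP h3 _ (mem_colors k).
  move: h4.
  by move/eqP.
case=> Sigma H.
have Hxy : K (o0, o0) = K (o1, o1).
  apply: (inj_omap val_inj); rewrite K_Kc !Kval; vm_compute; reflexivity.
case: (proj1 (H _ _) Hxy) => s Hs0 Hs.
have Hz : forall z, K z = K (sym_act s z).
  move=> z; apply: (proj2 (H _ _)); by exists s.
clear Hs0; case: s Hs Hz => f g /= [Hf0 Hg0] Hz.
have HH : forall i j, Kn (f i, g j) = Kn (i, j).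
  by move=> i j; rewrite -!Kval -K_Kc (Hz (i, j)).
have L1 : forall b : 'I_5, Kn (o1, b) = Kn (o0, o1) -> b = o2.
  move=> b; ord5 b; vm_compute; intros; first [discriminate | apply: val_inj; reflexivity].
have L2 : forall a : 'I_5, Kn (a, o2) = Kn (o0, o0) -> a = o2.
  move=> b; ord5 b; vm_compute; intros; first [discriminate | apply: val_inj; reflexivity].
have L3 : forall b : 'I_5, Kn (o2, b) = Kn (o0, o1) -> b = o3.
  move=> b; ord5 b; vm_compute; intros; first [discriminate | apply: val_inj; reflexivity].
have g1 : g o1 = o2 by apply: L1; rewrite -Hf0 HH.
have f1 : f o1 = o2 by apply: L2; rewrite -g1 HH; vm_compute; reflexivity.
have g2 : g o2 = o3 by apply: L3; rewrite -{1}f1 HH; vm_compute; reflexivity.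
have := HH o0 o2; rewrite Hf0 g2.
vm_compute; discriminate.
Qed.
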